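(* Let $t>0$ and let $\mathcal{F}$ be a 2-cutset-safe hereditary graph class. Let $G\in\mathcal{F}$ and let $H$ be the prime base of an $\mathcal{F}$ prime decomposition of $G$. Then $\operatorname{tw}(G)=\operatorname{tw}(H)$. Further, letting $\mathcal{J}\subseteq\mathcal{F}$ be the set of all prime graphs in $\mathcal{F}$, we have $\operatorname{tw}(G)\le\max_{J\in\mathcal{J}}\operatorname{tw}(J)$.
   Context: All graphs are finite and simple; $\operatorname{tw}$ denotes treewidth; a hereditary graph class is one closed under taking induced subgraphs (and isomorphism). A clique cutset of $G$ is a clique $K$ of $G$ such that $G\setminus K$ is not connected. A connected graph $G$ has a 1-cutset if there is $x\in V(G)$ such that $G\setminus\{x\}$ has at least two components. A 2-cutset is a pair of vertices $u,v$ with $G\setminus\{u,v\}$ not connected; it is proper if $V(G)\setminus\{u,v\}$ can be partitioned into two sets $X,Y$ with $X$ anticomplete to $Y$ (no edges between them) and $|X|,|Y|\ge 2$. For a component $C$ of $G\setminus\{u,v\}$, $\operatorname{cl}(C)$ is obtained from the subgraph induced by $C\cup\{u,v\}$ by adding the edge $uv$, and $\operatorname{cl}^*(C)$ is obtained from $\operatorname{cl}(C)$ by subdividing the edge $uv$ exactly once. The class $\mathcal{F}$ is 2-cutset-safe if for every $G\in\mathcal{F}$ with no 1-cutset, every 2-cutset $\{u,v\}$ of $G$ and every component $C$ of $G\setminus\{u,v\}$, either $\operatorname{cl}(C)\in\mathcal{F}$ or $\operatorname{cl}^*(C)\in\mathcal{F}$. A graph is prime if it has no clique cutset and no proper 2-cutset.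 For $G\in\mathcal{F}$, an $\mathcal{F}$ prime decomposition of $G$ is a sequence $(G_0,\dots,G_k)$ defined as follows: $G_0=G$; for $i\ge1$, if $G_{i-1}$ is prime the sequence ends (with $k=i-1$); otherwise, if $i$ is odd, $G_i$ is an induced subgraph of $G_{i-1}$ with no clique cutset and, subject to that, of maximum treewidth; if $i$ is even, then $G_{i-1}$ has no clique cutset but is not prime, so it has a proper 2-cutset $\{u,v\}$; letting $C_1,\dots,C_m$ be the components of $G_{i-1}\setminus\{u,v\}$, $G_i$ is a graph of maximum treewidth in $\mathcal{F}\cap\{\operatorname{cl}(C_1),\dots,\operatorname{cl}(C_m),\operatorname{cl}^*(C_1),\dots,\operatorname{cl}^*(C_m)\}$. The last graph $G_k$ is prime and is called the prime base of the decomposition. *)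

(* Defs.v *)
From Stdlib Require Import ClassicalEpsilon.
From mathcomp Require Import all_boot.

Set Implicit Arguments.
Unset Strict Implicit.
Unset Printing Implicit Defensive.

Record graph := Graph {
  vert : finType;
  adj : rel vert;
  adj_sym : symmetric adj;
  adj_irr : irreflexive adj }.
Arguments adj : clear implicits.
Arguments adj_sym : clear implicits.
Arguments adj_irr : clear implicits.

(* x and y are joined by a path all of whose vertices lie in S
   (trivially true when x = y). *)
Definition connect_in (G : graph) (S : {set vert G}) (x y : vert G) : bool :=
  connect [rel a b | (a \in S) && (b \in S) && adj G a b] x y.

Definition connected_on (G : graph) (S : {set vert G}) : Prop :=
  forall x y, x \in S -> y \in S -> connect_in S x y.

(* G is connected (the null graph counts as connected). *)
Definition connectedG (G : graph) : Prop := forall x y : vert G, connect (adj G) x y.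

Definition is_component (G : graph) (X C : {set vert G}) : Prop :=
  [/\ C \subset X, C != set0, connected_on C &
      forall x y, x \in C -> y \in X -> adj G x y -> y \in C].

Section Induced.
Variables (G : graph) (S : {set vert G}).
Definition ind_adj : rel {x : vert G | x \in S} :=
  fun x y => adj G (val x) (val y).
Lemma ind_adj_sym : symmetric ind_adj.
Proof. by move=> x y; rewrite /ind_adj adj_sym. Qed.
Lemma ind_adj_irr : irreflexive ind_adj.
Proof. by move=> x; rewrite /ind_adj adj_irr. Qed.
End Induced.

Definition induced (G : graph) (S : {set vert G}) : graph :=
  Graph (@ind_adj_sym G S) (@ind_adj_irr G S).

Definition iso (G H : graph) : Prop :=
  exists f : vert G -> vert H, bijective f /\
    forall x y, adj H (f x) (f y) = adj G x y.

Definition hereditary (F : graph -> Prop) : Prop :=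
  (forall G H, iso G H -> F G -> F H) /\
  (forall G (S : {set vert G}), F G -> F (induced S)).

Definition is_clique (G : graph) (K : {set vert G}) : Prop :=
  forall x y, x \in K -> y \in K -> x != y -> adj G x y.

(* a clique K (possibly empty) with G \ K not connected *)
Definition has_clique_cutset (G : graph) : Prop :=
  exists K : {set vert G}, is_clique K /\
    exists x y, x \notin K /\ y \notin K /\ ~ connect_in (~: K) x y.

Definition has_1cutset (G : graph) : Prop :=
  connectedG G /\ exists x y z : vert G,
    y != x /\ z != x /\ ~ connect_in (~: [set x]) y z.

Definition two_cutset (G : graph) (u v : vert G) : Prop :=
  u != v /\ exists x y, x \notin [set u; v] /\ y \notin [set u; v] /\
    ~ connect_in (~: [set u; v]) x y.

Definition proper_2cutset (G : graph) (u v : vert G) : Prop :=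
  u != v /\ exists X : {set vert G},
    [/\ X \subset ~: [set u; v], 1 < #|X|, 1 < #|(~: [set u; v]) :\: X| &
        forall x y, x \in X -> y \in (~: [set u; v]) :\: X -> ~~ adj G x y].

Definition is_prime (G : graph) : Prop :=
  ~ has_clique_cutset G /\ ~ (exists u v : vert G, proper_2cutset u v).

Section Closures.
Variables (G : graph) (u v : vert G) (C : {set vert G}).
Definition clV := {x : vert G | x \in C :|: [set u; v]}.

(* G[C ∪ {u,v}] plus the edge uv *)
Definition cl_adj : rel clV := fun x y =>
  adj G (val x) (val y) || ((val x != val y) && ([set val x; val y] == [set u; v])).
Lemma cl_adj_sym : symmetric cl_adj.
Proof. by move=> x y; rewrite /cl_adj adj_sym eq_sym [[set val y; val x]]setUC. Qed.
Lemma cl_adj_irr : irreflexive cl_adj.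
Proof. by move=> x; rewrite /cl_adj adj_irr eqxx. Qed.

(* cl(C) with the edge uv subdivided once (new vertex None) *)
Definition cls_adj : rel (option clV) := fun a b =>
  match a, b with
  | Some x, Some y => adj G (val x) (val y) && ~~ ([set val x; val y] == [set u; v])
  | Some x, None | None, Some x => (val x == u) || (val x == v)
  | None, None => false
  end.
Lemma cls_adj_sym : symmetric cls_adj.
Proof. by case=> [x|] [y|] //=; rewrite adj_sym [[set val y; val x]]setUC. Qed.
Lemma cls_adj_irr : irreflexive cls_adj.
Proof. by case=> [x|] //=; rewrite adj_irr. Qed.
End Closures.

Definition cl (G : graph) (u v : vert G) (C : {set vert G}) : graph :=
  Graph (@cl_adj_sym G u v C) (@cl_adj_irr G u v C).
Definition clstar (G : graph) (u v : vert G) (C : {set vert G}) : graph :=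
  Graph (@cls_adj_sym G u v C) (@cls_adj_irr G u v C).
(* b = false : cl(C);  b = true : cl*(C) *)
Definition clb (G : graph) (u v : vert G) (C : {set vert G}) (b : bool) : graph :=
  if b then clstar u v C else cl u v C.

Definition two_cutset_safe (F : graph -> Prop) : Prop :=
  forall (G : graph) (u v : vert G) (C : {set vert G}),
    F G -> connectedG G -> ~ has_1cutset G -> two_cutset u v ->
    is_component (~: [set u; v]) C -> F (cl u v C) \/ F (clstar u v C).

Definition is_tree (m : nat) (r : rel 'I_m) : Prop :=
  [/\ 0 < m, symmetric r, irreflexive r, (forall i j, connect r i j) &
      #|[set p : 'I_m * 'I_m | (val p.1 < val p.2) && r p.1 p.2]| = m.-1].

Definition tw_le (G : graph) (k : nat) : Prop :=
  exists (m : nat) (r : rel 'I_m) (B : 'I_m -> {set vert G}),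
  [/\ is_tree r,
      (forall x, exists i, x \in B i),
      (forall x y, adj G x y -> exists i, (x \in B i) && (y \in B i)),
      (forall x i j, x \in B i -> x \in B j ->
          connect [rel a b | r a b && (x \in B a) && (x \in B b)] i j) &
      (forall i, #|B i| <= k.+1)].

Lemma tw_le_ex (G : graph) : exists k, tw_le G k.
Proof.
exists #|vert G|, 1, [rel _ _ | false], (fun _ => setT); split.
- split=> //.
  + by move=> i j; rewrite (ord1 i) (ord1 j) connect0.
  + by apply/eqP; rewrite cards_eq0; apply/eqP/setP=> p; rewrite !inE andbF.
- by move=> x; exists ord0; rewrite inE.
- by move=> x y _; exists ord0; rewrite !inE.
- by move=> x i j _ _; rewrite (ord1 i) (ord1 j) connect0.
- by move=> i; rewrite cardsT leqnSn.
Qed.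

Definition tw_leb (G : graph) (k : nat) : bool :=
  if excluded_middle_informative (tw_le G k) then true else false.

Lemma tw_leb_ex (G : graph) : exists k, tw_leb G k.
Proof.
have [k hk] := tw_le_ex G; exists k; rewrite /tw_leb.
by case: excluded_middle_informative.
Qed.

(* treewidth (the null graph gets treewidth 0 rather than -1) *)
Definition tw (G : graph) : nat := ex_minn (tw_leb_ex G).

(* ---------- F prime decompositions ----------
   pdec F i G H : the decomposition currently at G_{i-1} = G (so the next
   graph to be produced is G_i) ends with prime base H.                     *)
Inductive pdec (F : graph -> Prop) : nat -> graph -> graph -> Prop :=
| pdec_end i G : is_prime G -> pdec F i G G
| pdec_odd i G (S : {set vert G}) H :
    ~ is_prime G -> odd i ->
    ~ has_clique_cutset (induced S) ->
    (forall S' : {set vert G}, ~ has_clique_cutset (induced S') ->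
        tw (induced S') <= tw (induced S)) ->
    pdec F i.+1 (induced S) H -> pdec F i G H
| pdec_even i G (u v : vert G) (C : {set vert G}) (b : bool) H :
    ~ is_prime G -> ~~ odd i -> ~ has_clique_cutset G ->
    proper_2cutset u v ->
    is_component (~: [set u; v]) C ->
    F (clb u v C b) ->
    (forall (C' : {set vert G}) (b' : bool), is_component (~: [set u; v]) C' ->
        F (clb u v C' b') -> tw (clb u v C' b') <= tw (clb u v C b)) ->
    pdec F i.+1 (clb u v C b) H -> pdec F i G H.

Definition prime_base (F : graph -> Prop) (G H : graph) : Prop := pdec F 1 G H.

(* Main.v *)
Require Import Defs.
From Stdlib Require Import ClassicalEpsilon Classical.
From mathcomp Require Import all_boot zify.

Set Implicit Arguments.
Unset Strict Implicit.
Unset Printing Implicit Defensive.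

Section ConnectLemmas.
Variable T : finType.

Lemma connect_ind' (e : rel T) (P : T -> Prop) x y :
  connect e x y -> P x -> (forall a b, e a b -> P a -> P b) -> P y.
Proof.
move=> /connectP[p pth ->] Px step.
elim: p x pth Px => //= z p IH x /andP[exz pz] Px.
exact: IH pz (step _ _ exz Px).
Qed.

Lemma connect_first (e : rel T) x y : connect e x y -> x != y -> exists z, e x z.
Proof.
move=> /connectP[[|z p] /= pth ->]; first by rewrite eqxx.
by move=> _; exists z; case/andP: pth.
Qed.

Lemma connect_mono (e e' : rel T) x y :
  (forall a b, e a b -> e' a b) -> connect e x y -> connect e' x y.
Proof.
move=> H c; apply: (connect_ind' (P := fun z => connect e' x z)) c (connect0 _ _) _.
by move=> a b eab xa; apply: connect_trans xa (connect1 (H _ _ eab)).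
Qed.

Lemma connect_sym' (e : rel T) x y :
  (forall a b, e a b -> e b a) -> connect e x y -> connect e y x.
Proof.
move=> H c; apply: (connect_ind' (P := fun z => connect e z x)) c (connect0 _ _) _.
by move=> a b eab xa; apply: connect_trans (connect1 (H _ _ eab)) xa.
Qed.
End ConnectLemmas.

Lemma connect_homo (T1 T2 : finType) (e1 : rel T1) (e2 : rel T2) (g : T1 -> T2) :
  (forall a b, e1 a b -> e2 (g a) (g b)) ->
  forall x y, connect e1 x y -> connect e2 (g x) (g y).
Proof.
move=> H x y c.
apply: (connect_ind' (P := fun z => connect e2 (g x) (g z))) c (connect0 _ _) _.
by move=> a b eab xa; apply: connect_trans xa (connect1 (H _ _ eab)).
Qed.

Definition deg (T : finType) (r : rel T) (i : T) := #|[set j | r i j]|.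

Definition treeT (T : finType) (r : rel T) : Prop :=
  [/\ 0 < #|T|, symmetric r, irreflexive r, (forall i j, connect r i j) &
      \sum_i deg r i = 2 * (#|T|).-1].

Lemma sum_deg (T : finType) (r : rel T) :
  \sum_i deg r i = #|[set p : T * T | r p.1 p.2]|.
Proof.
rewrite /deg.
transitivity (\sum_(i | true) \sum_(j | r i j) 1).
  by apply: eq_bigr => i _; rewrite sum1_card; apply: eq_card => j; rewrite inE.
rewrite pair_big_dep sum1_card; apply: eq_card => p; by rewrite inE.
Qed.

Lemma pairs_count m (r : rel 'I_m) : symmetric r -> irreflexive r ->
  #|[set p : 'I_m * 'I_m | r p.1 p.2]| =
  2 * #|[set p : 'I_m * 'I_m | (val p.1 < val p.2) && r p.1 p.2]|.
Proof.
move=> rs ri.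
set L := [set p : 'I_m * 'I_m | (val p.1 < val p.2) && r p.1 p.2].
pose sw (p : 'I_m * 'I_m) := (p.2, p.1).
have swK : involutive sw by case.
have -> : [set p : 'I_m * 'I_m | r p.1 p.2] = L :|: sw @: L.
  apply/setP=> -[a b]; rewrite !inE /=.
  apply/idP/idP.
  - move=> rab; case: (ltngtP (val a) (val b)) => h.
    + by apply/orP; left; apply/andP; split.
    + apply/orP; right; apply/imsetP; exists (b, a) => //.
      by rewrite inE /= h rs.
    + by move: rab; rewrite (val_inj h) ri.
  - case/orP; first by case/andP.
    by case/imsetP=> -[c d]; rewrite inE /= => /andP[_ h] [-> ->]; rewrite rs.
rewrite cardsU.
have -> : L :&: sw @: L = set0.
  apply/setP=> -[a b]; rewrite !inE /=; apply/negP=> /andP[/andP[h _] /imsetP[[c d]]].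
  by rewrite inE /= => /andP[h' _] [e1 e2]; subst; lia.
rewrite cards0 subn0 card_imset; last exact: inv_inj.
by rewrite mul2n addnn.
Qed.

Lemma is_tree_treeT m (r : rel 'I_m) : is_tree r <-> treeT r.
Proof.
split.
- case=> m0 rs ri rc ec; split=> //; first by rewrite card_ord.
  by rewrite sum_deg pairs_count // ec card_ord.
- case; rewrite card_ord => m0 rs ri rc ec; split=> //.
  move: ec; rewrite sum_deg pairs_count //; lia.
Qed.
Definition brel (V N : finType) (r : rel N) (B : N -> {set V}) (x : V) : rel N :=
  [rel a b | r a b && (x \in B a) && (x \in B b)].

Definition dec (V N : finType) (e : rel V) (S : {set V}) (k : nat)
  (r : rel N) (B : N -> {set V}) : Prop :=
  treeT r /\ [/\ (forall i, B i \subset S), (forall x, x \in S -> exists i, x \in B i),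
      (forall x y, x \in S -> y \in S -> e x y -> exists i, (x \in B i) && (y \in B i)),
      (forall x i j, x \in B i -> x \in B j -> connect (brel r B x) i j) &
      (forall i, #|B i| <= k.+1)].

Definition td (V : finType) (e : rel V) (S : {set V}) (k : nat) (Z : {set V}) : Prop :=
  exists (N : finType) (r : rel N) (B : N -> {set V}),
    dec e S k r B /\ exists i, Z \subset B i.

Lemma td_of_tw_le (H : graph) (V : finType) (f : vert H -> V) (e : rel V)
  (S : {set V}) k :
  injective f -> (forall x, f x \in S) -> (forall y, y \in S -> exists x, f x = y) ->
  (forall x y, e (f x) (f y) -> adj H x y) -> tw_le H k -> td e S k set0.
Proof.
move=> finj fS fsurj fe [m [r [B [tr cov edg con siz]]]].
exists 'I_m, r, (fun i => f @: B i); split; last first.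
  by case: tr => m0 _ _ _ _; exists (Ordinal m0); rewrite sub0set.
split; first exact/is_tree_treeT.
split.
- move=> i; apply/subsetP=> y /imsetP[x _ ->]; exact: fS.
- move=> y /fsurj[x <-]; have [i hi] := cov x; exists i; exact: imset_f.
- move=> y1 y2 /fsurj[x1 <-] /fsurj[x2 <-] /fe /edg[i /andP[h1 h2]].
  by exists i; rewrite !imset_f.
- move=> y i j /imsetP[x1 h1 ->] /imsetP[x2 h2 e12].
  have ex := finj _ _ e12; subst x2.
  apply: connect_mono (con _ _ _ h1 h2) => a b /andP[/andP[rab ha] hb].
  by rewrite /brel /= rab !imset_f.
- move=> i; apply: leq_trans (leq_imset_card _ _) (siz i).
Qed.

Lemma tw_le_of_td (G : graph) k Z : td (adj G) setT k Z -> tw_le G k.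
Proof.
move=> [N [r [B [[tr [sub cov edg con siz]] _]]]].
case: tr => n0 rs ri rc sd.
pose ev := (enum_val : 'I_#|N| -> N).
pose rk := (enum_rank : N -> 'I_#|N|).
have evK : cancel ev rk := @enum_valK N.
have rkK : cancel rk ev := @enum_rankK N.
exists #|N|, (fun a b => r (ev a) (ev b)), (fun a => B (ev a)); split.
- apply/is_tree_treeT; split.
  + by rewrite card_ord.
  + by move=> a b; rewrite rs.
  + by move=> a; rewrite ri.
  + move=> a b; rewrite -(evK a) -(evK b).
    apply: (connect_homo (e1 := r)) (rc _ _) => x y.
    by rewrite !rkK.
  + rewrite card_ord -sd.
    have bij : {on [pred i | true], bijective ev}.
      by apply: onW_bij; exists rk.
    rewrite (reindex ev bij) /=; apply: eq_bigr => a _.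
    rewrite /deg.
    have -> : [set j | r (ev a) (ev j)] = ev @^-1: [set j | r (ev a) j].
      by apply/setP=> j; rewrite !inE.
    by rewrite on_card_preimset //; apply: onW_bij; exists rk.
- move=> x; have [i hi] := cov x (in_setT x); exists (rk i); by rewrite rkK.
- move=> x y /(edg _ _ (in_setT x) (in_setT y))[i hi]; exists (rk i); by rewrite rkK.
- move=> x a b ha hb; rewrite -(evK a) -(evK b).
  apply: (connect_homo (e1 := brel r B x)) (con _ _ _ ha hb) => c d /=.
  by rewrite !rkK.
- by move=> a; apply: siz.
Qed.

Lemma tw_leP (G : graph) k : tw_le G k <-> tw_leb G k.
Proof. by rewrite /tw_leb; case: excluded_middle_informative => h; split. Qed.

Lemma tw_spec (G : graph) : tw_le G (tw G).
Proof. by rewrite /tw; case: ex_minnP => n /tw_leP. Qed.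

Lemma tw_min (G : graph) k : tw_le G k -> tw G <= k.
Proof. by rewrite /tw => /tw_leP h; case: ex_minnP => n _ /(_ k h). Qed.

Lemma td_weak (V : finType) (e e' : rel V) S k k' (Z Z' : {set V}) :
  (forall x y, e' x y -> e x y) -> k <= k' -> Z' \subset Z ->
  td e S k Z -> td e' S k' Z'.
Proof.
move=> ee kk ZZ [N [r [B [[tr [sub cov edg con siz]] [i0 hi0]]]]].
exists N, r, B; split; last by exists i0; apply: subset_trans hi0.
split=> //; split=> //.
- by move=> x y xs ys /ee; apply: edg.
- by move=> i; apply: leq_trans (siz i) _.
Qed.
Definition minor_model (H G : graph) (phi : vert H -> {set vert G}) : Prop :=
  [/\ forall h, phi h != set0,
      forall h h', h != h' -> [disjoint phi h & phi h'],
      forall h, connected_on (phi h) &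
      forall a b, adj H a b -> exists x y, [/\ x \in phi a, y \in phi b & adj G x y]].

Lemma minor_tw_le (H G : graph) (phi : vert H -> {set vert G}) k :
  minor_model phi -> tw_le G k -> tw_le H k.
Proof.
move=> [ne dj cn ed] [m [r [B [tr cov edg con siz]]]].
pose B' i := [set h | [exists x, (x \in phi h) && (x \in B i)]].
have inB' h i x : x \in phi h -> x \in B i -> h \in B' i.
  by move=> h1 h2; rewrite inE; apply/existsP; exists x; rewrite h1.
exists m, r, B'; split=> //.
- move=> h; have /set0Pn[x hx] := ne h; have [i hi] := cov x.
  by exists i; apply: inB' hx hi.
- move=> a b /ed[x [y [hx hy xy]]]; have [i /andP[h1 h2]] := edg _ _ xy.
  by exists i; rewrite (inB' _ _ _ hx h1) (inB' _ _ _ hy h2).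
- move=> h i j; rewrite !inE => /existsP[a /andP[ha hai]] /existsP[b /andP[hb hbj]].
  have mono c : c \in phi h -> forall t u, connect (brel r B c) t u ->
      connect (brel r B' h) t u.
    move=> hc t u; apply: connect_mono => p q /andP[/andP[rpq hp] hq].
    by rewrite /brel /= rpq (inB' _ _ _ hc hp) (inB' _ _ _ hc hq).
  have := cn h a b ha hb; rewrite /connect_in => cab.
  apply: (connect_ind' (P := fun c => forall j, c \in B j ->
            connect (brel r B' h) i j)) cab _ _ j hbj.
  + by move=> j' hj'; apply: mono ha _ _ (con _ _ _ hai hj').
  + move=> c d /andP[/andP[hc hd] cd] Pc j' hj'.
    have [t /andP[ct dt]] := edg _ _ cd.
    apply: connect_trans (Pc _ ct) _.
    exact: mono hd _ _ (con _ _ _ dt hj').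
- move=> i; apply: leq_trans (siz i).
  pose f h := [pick x in phi h :&: B i].
  have finj : {in B' i &, injective f}.
    move=> h h'; rewrite !inE => /existsP[x /andP[x1 x2]] /existsP[y /andP[y1 y2]].
    rewrite /f; case: pickP => [z|]; last by move/(_ x); rewrite inE x1 x2.
    rewrite inE => /andP[z1 z2].
    case: pickP => [z'|]; last by move/(_ y); rewrite inE y1 y2.
    rewrite inE => /andP[z1' z2'] [ezz]; subst z'.
    apply/eqP; apply/negPn/negP => /dj /disjoint_setI0 /setP /(_ z).
    by rewrite !inE z1 z1'.
  rewrite -(card_in_imset finj) -[#|B i|](card_imset _ (@Some_inj _)).
  apply: subset_leq_card; apply/subsetP=> o /imsetP[h]; rewrite inE => /existsP[x /andP[x1 x2]] ->.
  rewrite /f; case: pickP => [z|]; last by move/(_ x); rewrite inE x1 x2.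
  by rewrite inE => /andP[_ z2]; apply: imset_f.
Qed.

Lemma minor_tw (H G : graph) (phi : vert H -> {set vert G}) :
  minor_model phi -> tw H <= tw G.
Proof. by move=> mm; apply: tw_min; apply: minor_tw_le mm (tw_spec G). Qed.
(* ---------- Helly: pairwise covered sets lie in one bag ---------- *)
Section Avoid.
Variables (N : finType) (l p : N).
Local Notation N' := {i : N | i != l}.

Lemma avoid_connect (e : rel N) (a b : N') :
  (forall c, e l c -> c = p) -> (forall c, e c l -> c = p) -> p != l ->
  connect e (val a) (val b) -> connect [rel x y : N' | e (val x) (val y)] a b.
Proof.
move=> h1 h2 pl c.
pose e' := [rel x y : N' | e (val x) (val y)].
suff [key _] : (val b != l -> connect e' a (insubd a (val b))) /\
   (val b = l -> connect e' a (insubd a p)) by have := key (valP b); rewrite valKd.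
apply: (connect_ind' (P := fun c => (c != l -> connect e' a (insubd a c)) /\
   (c = l -> connect e' a (insubd a p)))) c _ _.
  by split=> [_|h]; [rewrite valKd | move: (valP a); rewrite h eqxx].
move=> c d ecd [Pc1 Pc2]; split=> [dl|dl].
- case: (eqVneq c l) => [cl|cl].
  + by subst c; rewrite (h1 _ ecd); apply: Pc2.
  + apply: connect_trans (Pc1 cl) (connect1 _).
    by rewrite /= !insubdK.
- subst d; have cp := h2 _ ecd; subst c; exact: Pc1.
Qed.
End Avoid.

Lemma helly_n (n : nat) : forall (V N : finType) (r : rel N) (B : N -> {set V}) (K : {set V}),
  #|N| = n -> treeT r ->
  (forall x i j, x \in B i -> x \in B j -> connect (brel r B x) i j) ->
  (forall x y, x \in K -> y \in K -> exists i, (x \in B i) && (y \in B i)) ->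
  exists i, K \subset B i.
Proof.
elim: n => [|n IH] V N r B K cN tr con pairs.
  by case: tr; rewrite cN.
have [i0 _] : exists i0 : N, true.
  by case: tr => h _ _ _ _; move/card_gt0P: h => [i0 _]; exists i0.
case: n IH cN => [|n] IH cN.
  exists i0; apply/subsetP=> x xK; have [i /andP[hi _]] := pairs _ _ xK xK.
  have /card_le1_eqP h : #|N| <= 1 by rewrite cN.
  by rewrite (h i i0 isT isT).
case: tr => n0 rs ri rc sd.
(* find a leaf *)
have [l dl] : exists l, deg r l <= 1.
  case: (boolP [exists l, deg r l <= 1]) => [/existsP//|]; rewrite negb_exists => /forallP h.
  have : \sum_(i : N) 2 <= \sum_i deg r i.
    by apply: leq_sum => i _; move: (h i); rewrite -ltnNge.
  by rewrite sd sum_nat_const cN; lia.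
have [p lp] : exists p, [set j | r l j] = [set p].
  apply/cards1P; rewrite eqn_leq dl /=.
  have [j jl] : exists j, j != l.
    case: (boolP [exists j, j != l]) => [/existsP//|]; rewrite negb_exists => /forallP h.
    have : #|N| <= 1.
      by apply/card_le1_eqP => a b _ _; move: (h a) (h b); rewrite !negbK => /eqP -> /eqP ->.
    by rewrite cN.
  have [z hz] : exists z, r l z by apply: (connect_first (rc l j)); rewrite eq_sym.
  by apply/card_gt0P; exists z; rewrite inE.
have rl c : r l c -> c = p by move=> h; apply/set1P; rewrite -lp inE.
have rl' c : r c l -> c = p by rewrite rs; apply: rl.
have rlp : r l p by have := set11 p; rewrite -lp inE.
have pl : p != l by apply/negP=> /eqP e; move: rlp; rewrite e ri.
have [Kl|] := boolP (K \subset B l); first by exists l.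
case/subsetPn=> x0 x0K x0l.
pose p' : {i : N | i != l} := Sub p pl.
pose r' := [rel a b : {i : N | i != l} | r (val a) (val b)].
pose B' := fun a : {i : N | i != l} => B (val a).
have cN' : #|{: {i : N | i != l}}| = n.+1.
  by rewrite card_sig cardC1 cN.
have sumval (F : N -> nat) : \sum_(a : {i : N | i != l}) F (val a) = \sum_(i | i != l) F i.
  symmetry; rewrite (reindex (val : {i : N | i != l} -> N)) /=; last first.
    by exists (insubd p') => a; rewrite ?inE => h; [exact: valKd | exact: insubdK].
  by apply: eq_bigl => a; rewrite (valP a).
have degr' a : deg r' a + (val a == p) = deg r (val a).
  rewrite /deg (cardsD1 l [set j | r (val a) j]) inE.
  have -> : r (val a) l = (val a == p).
    by apply/idP/eqP=> [/rl' //| ->]; rewrite rs.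
  rewrite addnC; congr (_ + _).
  have -> : [set j | r (val a) j] :\ l = val @: [set b | r' a b].
    apply/setP=> j; rewrite !inE; apply/andP/imsetP.
    - by move=> [jl rj]; exists (Sub j jl); rewrite ?inE.
    - by move=> [b]; rewrite inE => rb ->; rewrite (valP b).
  by rewrite card_imset //; exact: val_inj.
have tr' : treeT r'.
  split.
  - by rewrite cN'.
  - by move=> a b; rewrite /= rs.
  - by move=> a; rewrite /= ri.
  - move=> a b; apply: (avoid_connect (p := p)) => //.
  - rewrite cN' /=.
    have e1 : \sum_i deg r i = 1 + \sum_(i | i != l) deg r i.
      by rewrite (bigD1 l) //= {1}/deg lp cards1.
    have := sd; rewrite e1 -(sumval (deg r)).
    have -> : \sum_(a : {i : N | i != l}) deg r (val a) =
              \sum_(a : {i : N | i != l}) deg r' a + \sum_(a : {i : N | i != l}) (val a == p).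
      by rewrite -big_split /=; apply: eq_bigr => a _; rewrite degr'.
    have -> : \sum_(a : {i : N | i != l}) (val a == p) = 1.
      rewrite (sumval (fun i => nat_of_bool (i == p))) (bigD1 p) //= eqxx big1 // => i /andP[_ ip].
      by rewrite (negbTE ip).
    rewrite cN => h.
    have -> : \sum_i deg r' i = \sum_(a : {i : N | i != l}) deg r' a by [].
    lia.
have con' : forall x a b, x \in B' a -> x \in B' b -> connect (brel r' B' x) a b.
  move=> x a b ha hb; have c := con _ _ _ ha hb.
  apply: (avoid_connect (p := p)) c => // c'.
    by move=> /andP[/andP[h _] _]; exact: rl h.
  by move=> /andP[/andP[h _] _]; exact: rl' h.
have pairs' : forall x y, x \in K -> y \in K -> exists a, (x \in B' a) && (y \in B' a).
  move=> x y xK yK; have [i /andP[xi yi]] := pairs _ _ xK yK.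
  case: (eqVneq i l) => [il|il]; last by exists (Sub i il); rewrite /B' /= xi yi.
  subst i.
  have inp z : z \in K -> z \in B l -> z \in B p.
    move=> zK zl; have [j /andP[zj x0j]] := pairs _ _ zK x0K.
    have jl : l != j by apply: contraNneq x0l => ->.
    have [c /andP[/andP[rlc _] zc]] := connect_first (con _ _ _ zl zj) jl.
    by rewrite -(rl _ rlc).
  by exists p'; rewrite /B' /= !inp.
have [a ha] := IH V _ r' B' K cN' tr' con' pairs'.
by exists (val a).
Qed.

Lemma td_helly (V : finType) (e : rel V) S k Z (K : {set V}) :
  td e S k Z -> K \subset S ->
  (forall x y, x \in K -> y \in K -> x != y -> e x y) -> td e S k K.
Proof.
move=> [N [r [B [[tr [sub cov edg con siz]] _]]]] KS Kc.
exists N, r, B; split; first by split.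
apply: (helly_n (erefl #|N|) tr con) => x y xK yK.
case: (eqVneq x y) => [<-|xy].
  by have [i hi] := cov x (subsetP KS _ xK); exists i; rewrite hi.
exact: edg (subsetP KS _ xK) (subsetP KS _ yK) (Kc _ _ xK yK xy).
Qed.
Lemma degE (T : finType) (r : rel T) x : deg r x = \sum_j (r x j : nat).
Proof. by rewrite /deg -big_mkcond /= sum1_card; apply: eq_card => j; rewrite inE. Qed.

Lemma sum_pred1 (T : finType) (t : T) : \sum_(a : T) nat_of_bool (a == t) = 1.
Proof. by rewrite (bigD1 t) //= eqxx big1 // => a /negbTE ->. Qed.

Lemma arith_glue a b : 0 < a -> 0 < b ->
  2 * (a - 1) + 1 + (2 * (b - 1) + 1) = 2 * (a + b - 1).
Proof. lia. Qed.

Section Glue.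
Variables (V N1 N2 : finType) (r1 : rel N1) (r2 : rel N2) (i1 : N1) (i2 : N2).
Definition glue_rel (x y : N1 + N2) : bool :=
  match x, y with
  | inl a, inl b => r1 a b
  | inr a, inr b => r2 a b
  | inl a, inr b => (a == i1) && (b == i2)
  | inr b, inl a => (a == i1) && (b == i2)
  end.
Variables (B1 : N1 -> {set V}) (B2 : N2 -> {set V}).
Definition glue_bag (x : N1 + N2) : {set V} :=
  match x with inl a => B1 a | inr b => B2 b end.

Lemma glue_tree : treeT r1 -> treeT r2 -> treeT glue_rel.
Proof.
move=> [n1 rs1 ri1 rc1 sd1] [n2 rs2 ri2 rc2 sd2].
have c1 a b : connect r1 a b -> connect glue_rel (inl a) (inl b).
  by apply: connect_homo.
have c2 a b : connect r2 a b -> connect glue_rel (inr a) (inr b).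
  by apply: connect_homo.
have e12 : glue_rel (inl i1) (inr i2) by rewrite /= !eqxx.
have e21 : glue_rel (inr i2) (inl i1) by rewrite /= !eqxx.
have toi1 x : connect glue_rel x (inl i1) /\ connect glue_rel (inl i1) x.
  case: x => [a|b]; first by split; apply: c1.
  split.
    by apply: connect_trans (c2 _ _ (rc2 b i2)) (connect1 e21).
  by apply: connect_trans (connect1 e12) (c2 _ _ (rc2 i2 b)).
split.
- by rewrite card_sum addn_gt0 n1.
- by case=> a [b|b] //=; rewrite ?rs1 ?rs2.
- by case=> a /=; rewrite ?ri1 ?ri2.
- move=> x y; apply: connect_trans (proj1 (toi1 x)) (proj2 (toi1 y)).
- have cs : #|{: N1 + N2}| = #|N1| + #|N2| by rewrite card_sum.
  rewrite cs big_sumType /=.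
  have dl a : deg glue_rel (inl a) = deg r1 a + (a == i1).
    rewrite !degE big_sumType /=; congr (_ + _).
    case: (a == i1) => /=; last by rewrite big1.
    exact: sum_pred1.
  have dr b : deg glue_rel (inr b) = deg r2 b + (b == i2).
    rewrite !degE big_sumType /= addnC; congr (_ + _).
    rewrite (eq_bigr (fun a => nat_of_bool (a == i1) * (b == i2))); last first.
      by move=> a _; case: (a == i1); case: (b == i2).
    by rewrite -big_distrl /= sum_pred1 mul1n.
  rewrite (eq_bigr _ (fun a _ => dl a)) (eq_bigr _ (fun b _ => dr b)) !big_split /=.
  rewrite !sum_pred1 sd1 sd2 -!subn1; exact: arith_glue.
Qed.
End Glue.
Lemma td_glue (V : finType) (e : rel V) (A B Z : {set V}) k :
  td e A k Z -> td e B k Z -> A :&: B \subset Z ->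
  (forall x y, e x y -> x \in A -> x \notin B -> y \in B -> y \notin A -> False) ->
  (forall x y, e x y -> x \in B -> x \notin A -> y \in A -> y \notin B -> False) ->
  td e (A :|: B) k Z.
Proof.
move=> [N1 [r1 [B1 [[tr1 [sub1 cov1 edg1 con1 siz1]] [i1 Z1]]]]].
move=> [N2 [r2 [B2 [[tr2 [sub2 cov2 edg2 con2 siz2]] [i2 Z2]]]]] ABZ h1 h2.
exists (N1 + N2)%type, (glue_rel r1 r2 i1 i2), (glue_bag B1 B2).
split; last by exists (inl i1).
split; first exact: glue_tree.
have L1 x a b : connect (brel r1 B1 x) a b ->
    connect (brel (glue_rel r1 r2 i1 i2) (glue_bag B1 B2) x) (inl a) (inl b).
  by apply: connect_homo.
have L2 x a b : connect (brel r2 B2 x) a b ->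
    connect (brel (glue_rel r1 r2 i1 i2) (glue_bag B1 B2) x) (inr a) (inr b).
  by apply: connect_homo.
split.
- case=> [a|b] /=.
    by apply: subset_trans (sub1 a) (subsetUl _ _).
  by apply: subset_trans (sub2 b) (subsetUr _ _).
- move=> x; rewrite inE => /orP[/cov1[i hi]|/cov2[i hi]].
    by exists (inl i).
  by exists (inr i).
- move=> x y xAB yAB exy.
  have useA : x \in A -> y \in A -> exists i, (x \in glue_bag B1 B2 i) && (y \in glue_bag B1 B2 i).
    by move=> xA yA; have [i hi] := edg1 _ _ xA yA exy; exists (inl i).
  have useB : x \in B -> y \in B -> exists i, (x \in glue_bag B1 B2 i) && (y \in glue_bag B1 B2 i).
    by move=> xB yB; have [i hi] := edg2 _ _ xB yB exy; exists (inr i).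
  move: xAB yAB; rewrite !inE.
  case xA: (x \in A); case xB: (x \in B); case yA: (y \in A); case yB: (y \in B) => //= _ _;
    try by [apply: useA | apply: useB].
  + by exfalso; apply: (h1 x y) => //; rewrite ?xB ?yA.
  + by exfalso; apply: (h2 x y) => //; rewrite ?xA ?yB.
- have xZ x a b : x \in B1 a -> x \in B2 b -> (x \in B1 i1) && (x \in B2 i2).
    move=> xa xb; have : x \in Z.
      by apply: (subsetP ABZ); rewrite inE (subsetP (sub1 a)) ?(subsetP (sub2 b)).
    by move=> xz; rewrite (subsetP Z1) ?(subsetP Z2).
  have cross x : (x \in B1 i1) -> (x \in B2 i2) ->
      brel (glue_rel r1 r2 i1 i2) (glue_bag B1 B2) x (inl i1) (inr i2) /\
      brel (glue_rel r1 r2 i1 i2) (glue_bag B1 B2) x (inr i2) (inl i1).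
    by move=> h h'; rewrite /brel /= !eqxx h h'.
  move=> x [a|a] [b|b] /= ha hb.
  + exact: L1 (con1 _ _ _ ha hb).
  + have /andP[z1 z2] := xZ _ _ _ ha hb; have [c12 _] := cross _ z1 z2.
    apply: connect_trans (L1 _ _ _ (con1 _ _ _ ha z1)) _.
    exact: connect_trans (connect1 c12) (L2 _ _ _ (con2 _ _ _ z2 hb)).
  + have /andP[z1 z2] := xZ _ _ _ hb ha; have [_ c21] := cross _ z1 z2.
    apply: connect_trans (L2 _ _ _ (con2 _ _ _ ha z2)) _.
    exact: connect_trans (connect1 c21) (L1 _ _ _ (con1 _ _ _ z1 hb)).
  + exact: L2 (con2 _ _ _ ha hb).
- by case=> [a|b] /=.
Qed.
Lemma td_single (V : finType) (e : rel V) (Z : {set V}) k :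
  #|Z| <= k.+1 -> td e Z k Z.
Proof.
move=> hZ; exists unit, [rel _ _ | false], (fun _ => Z); split; last by exists tt.
split.
  split=> //.
  - by rewrite card_unit.
  - by move=> [] []; rewrite connect0.
  - rewrite card_unit big1 // => i _; rewrite /deg; apply/eqP; rewrite cards_eq0.
    by apply/eqP/setP=> j; rewrite !inE.
split.
- by move=> _; apply: subxx.
- by move=> x xZ; exists tt.
- by move=> x y xZ yZ _; exists tt; rewrite xZ yZ.
- by move=> x [] [] _ _; rewrite connect0.
- by move=> _.
Qed.

Section GraphBasics.
Variable G : graph.
Implicit Types (S D K : {set vert G}) (x y : vert G).

Definition crel S := [rel a b : vert G | (a \in S) && (b \in S) && adj G a b].

Lemma connect_in_sym S x y : connect_in S x y -> connect_in S y x.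
Proof.
apply: connect_sym' => a b /andP[/andP[ha hb] hab].
by rewrite /= ha hb adj_sym.
Qed.

Lemma connect_in_trans S x y z : connect_in S x y -> connect_in S y z -> connect_in S x z.
Proof. exact: connect_trans. Qed.

Lemma connect_in_closed S D x y :
  (forall a b, a \in D -> a \in S -> b \in S -> adj G a b -> b \in D) ->
  x \in D -> connect_in S x y -> y \in D.
Proof.
move=> cl xD c; apply: (connect_ind' (P := fun z => z \in D)) c xD _.
by move=> a b /andP[/andP[aS bS] ab] aD; apply: cl aD aS bS ab.
Qed.

Lemma connect_in_mono S S' x y : S \subset S' -> connect_in S x y -> connect_in S' x y.
Proof.
move=> sS; apply: connect_mono => a b /andP[/andP[aS bS] ab].
by rewrite /= (subsetP sS _ aS) (subsetP sS _ bS).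
Qed.

Lemma connect_in_edge S x y : x \in S -> y \in S -> adj G x y -> connect_in S x y.
Proof. by move=> xS yS xy; apply: connect1; rewrite /= xS yS. Qed.

Definition comp S x := [set z in S | connect_in S x z].

Lemma comp_self S x : x \in S -> x \in comp S x.
Proof. by move=> xS; rewrite inE xS /connect_in connect0. Qed.

Lemma comp_component S x : x \in S -> is_component S (comp S x).
Proof.
move=> xS.
have key z : connect_in S x z -> connect_in (comp S x) x z.
  move=> c; suff [] : connect_in S x z /\ connect_in (comp S x) x z by [].
  apply: (connect_ind' (P := fun z => connect_in S x z /\ connect_in (comp S x) x z)) c _ _.
    by split; apply: connect0.
  move=> a b ab [c1 c2]; have c1' : connect_in S x b by apply: connect_trans c1 (connect1 ab).
  split=> //; apply: connect_trans c2 (connect1 _).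
  case/andP: ab => /andP[aS bS] ab.
  by rewrite /= !inE aS bS c1 c1' ab.
split.
- by apply/subsetP=> z; rewrite inE => /andP[].
- by apply/set0Pn; exists x; apply: comp_self.
- move=> z w; rewrite !inE => /andP[_ cz] /andP[_ cw].
  exact: connect_trans (connect_in_sym (key _ cz)) (key _ cw).
- move=> z w; rewrite !inE => /andP[zS cz] wS zw; rewrite wS.
  exact: connect_trans cz (connect_in_edge zS wS zw).
Qed.


Lemma component_sub S C D :
  is_component S C -> D \subset S ->
  (forall a b, a \in D -> b \in S -> adj G a b -> b \in D) ->
  C :&: D != set0 -> C \subset D.
Proof.
move=> [CS Cne Ccon Ccl] DS Dcl /set0Pn[z]; rewrite inE => /andP[zC zD].
apply/subsetP=> w wC; have c := Ccon _ _ zC wC.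
apply: (connect_in_closed (D := D)) zD (c) => a b aD aC bC ab.
exact: Dcl aD (subsetP CS _ bC) ab.
Qed.

(* set version of clique cutsets *)
Definition ccs S : Prop :=
  exists K, [/\ K \subset S, is_clique K &
    exists x y, [/\ x \in S :\: K, y \in S :\: K & ~ connect_in (S :\: K) x y]].

Lemma cc_induced S : has_clique_cutset (induced S) <-> ccs S.
Proof.
split.
- move=> [K [Kc [x [y [xK [yK nc]]]]]].
  exists (val @: K); split.
  + by apply/subsetP=> z /imsetP[w _ ->]; exact: (valP w).
  + move=> a b /imsetP[a' a'K ->] /imsetP[b' b'K ->] ab.
    apply: (Kc _ _ a'K b'K).
    by apply: contraNneq ab => ->.
  + exists (val x), (val y); rewrite !inE !(mem_imset _ _ val_inj) xK yK (valP x) (valP y).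
    split=> // c; apply: nc.
    have hom : forall a b, crel (S :\: val @: K) a b ->
        [rel a b | (a \in ~: K) && (b \in ~: K) && adj (induced S) a b] (insubd x a) (insubd x b).
      move=> a b /andP[/andP[]]; rewrite !inE => /andP[aK aS] /andP[bK bS] ab.
      rewrite /= /ind_adj !insubdK //.
      rewrite ab andbT; apply/andP; split.
        by apply: contra aK => h; rewrite -(insubdK x aS); apply: imset_f.
      by apply: contra bK => h; rewrite -(insubdK x bS); apply: imset_f.
    by have := @connect_homo _ _ _ [rel a b | (a \in ~: K) && (b \in ~: K) && adj (induced S) a b] (insubd x) hom _ _ c; rewrite !valKd.
- move=> [K [KS Kc [x [y [xK yK nc]]]]].
  have xS : x \in S by move: xK; rewrite inE => /andP[].
  have yS : y \in S by move: yK; rewrite inE => /andP[].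
  pose x' : vert (induced S) := Sub x xS.
  pose y' : vert (induced S) := Sub y yS.
  exists [set z : vert (induced S) | val z \in K]; split.
    by move=> a b; rewrite !inE => aK bK ab; apply: Kc.
  exists x', y'; split; first by rewrite !inE /=; move: xK; rewrite !inE => /andP[].
  split; first by rewrite !inE /=; move: yK; rewrite !inE => /andP[].
  move=> c; apply: nc.
  have hom : forall a b, [rel a b | (a \in ~: [set z : vert (induced S) | val z \in K]) &&
      (b \in ~: [set z : vert (induced S) | val z \in K]) && adj (induced S) a b] a b ->
      crel (S :\: K) (val a) (val b).
    move=> a b; rewrite /= !inE => /andP[/andP[aK bK] ab].
    by rewrite aK bK (valP a) (valP b).
  exact: (@connect_homo _ _ _ (crel (S :\: K)) val hom _ _ c).
Qed.

Lemma cc_G : has_clique_cutset G <-> ccs setT.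
Proof.
have E K : ~: K = setT :\: K by rewrite setTD.
split.
- move=> [K [Kc [x [y [xK [yK nc]]]]]]; exists K; split=> //.
  by exists x, y; rewrite -E; split=> //; rewrite !inE ?xK ?yK.
- move=> [K [_ Kc [x [y [xK yK nc]]]]]; exists K; split=> //.
  exists x, y; move: xK yK; rewrite !inE ?andbT => xK yK.
  by split=> //; split=> //; rewrite E.
Qed.

Lemma nocc_connected : ~ has_clique_cutset G -> connectedG G.
Proof.
move=> ncc x y; apply/negPn/negP => nc; apply: ncc.
exists set0; split; first by move=> a b; rewrite inE.
exists x, y; rewrite !inE; split=> //; split=> // c; apply: (negP nc).
by apply: connect_mono c => a b /andP[].
Qed.

Lemma nocc_no1cut : ~ has_clique_cutset G -> ~ has_1cutset G.
Proof.
move=> ncc [_ [x [y [z [yx [zx nc]]]]]]; apply: ncc.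
exists [set x]; split; first by move=> a b; rewrite !inE => /eqP-> /eqP->; rewrite eqxx.
by exists y, z; rewrite !inE yx zx; split.
Qed.
End GraphBasics.
(* ---------- clique cutsets preserve treewidth ---------- *)
Lemma td_induced (G : graph) (S : {set vert G}) :
  td (adj G) S (tw (induced S)) set0.
Proof.
apply: (td_of_tw_le (H := induced S) (f := val)) (tw_spec _) => //.
- exact: val_inj.
- by move=> x; exact: (valP x).
- by move=> y yS; exists (Sub y yS).
Qed.

Lemma odd_lemma (G : graph) n : forall S : {set vert G}, #|S| <= n ->
  exists S' : {set vert G}, [/\ S' \subset S, ~ has_clique_cutset (induced S') &
                 td (adj G) S (tw (induced S')) set0].
Proof.
elim: n => [|n IH] S hS; (case: (classic (has_clique_cutset (induced S))) => hcc;
  [|by exists S; split=> //; exact: td_induced]).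
  case: hcc => K [_ [x _]]; move: hS; rewrite leqn0 cards_eq0 => /eqP S0.
  by case: x => z; rewrite S0 inE.
move/cc_induced: hcc => [K [KS Kc [x0 [y0 [x0K y0K nc]]]]].
pose A := comp (S :\: K) x0.
have x0A : x0 \in A by apply: comp_self.
have Acomp := comp_component x0K.
have AS : A \subset S :\: K by case: Acomp.
have y0A : y0 \notin A by rewrite inE y0K /= ; exact/negP.
pose A' := A :|: K.
pose B' := S :\: A.
have inAS z : z \in A -> (z \in S) && (z \notin K).
  by move=> zA; have := subsetP AS _ zA; rewrite inE andbC.
have A'S : A' \subset S.
  apply/subsetP=> z; rewrite inE => /orP[/inAS/andP[]//|]; exact: (subsetP KS).
have ltA : #|A'| < #|S|.
  apply: proper_card; apply/properP; split=> //; exists y0.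
    by move: y0K; rewrite inE => /andP[].
  by rewrite inE negb_or y0A; move: y0K; rewrite inE => /andP[].
have ltB : #|B'| < #|S|.
  apply: proper_card; apply/properP; split; first exact: subsetDl.
  by exists x0; [move: x0K; rewrite inE => /andP[] | rewrite inE x0A].
have [S1 [S1A nc1 td1]] := IH _ (leq_trans ltA hS).
have [S2 [S2B nc2 td2]] := IH _ (leq_trans ltB hS).
set k1 := tw (induced S1) in td1; set k2 := tw (induced S2) in td2.
have Kc' : forall x y, x \in K -> y \in K -> x != y -> adj G x y by [].
have KA' : K \subset A' by apply: subsetUr.
have KB' : K \subset B'.
  apply/subsetP=> z zK; rewrite inE (subsetP KS _ zK) andbT.
  by apply/negP=> /inAS; rewrite zK andbF.
have tdA : td (adj G) A' (maxn k1 k2) K.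
  by apply: td_helly KA' Kc'; apply: td_weak td1; rewrite ?leq_maxl ?sub0set.
have tdB : td (adj G) B' (maxn k1 k2) K.
  by apply: td_helly KB' Kc'; apply: td_weak td2; rewrite ?leq_maxr ?sub0set.
have tdS : td (adj G) (A' :|: B') (maxn k1 k2) K.
  apply: td_glue tdA tdB _ _ _.
  - apply/subsetP=> z; rewrite !inE => /andP[/orP[zA|zK] /andP[zA' _]] //.
    by rewrite zA in zA'.
  - move=> x y xy xA' xB' yB' yA'.
    have xS := subsetP A'S _ xA'.
    have xA : x \in A by move: xB'; rewrite in_setD xS andbT negbK.
    move: yB' yA'; rewrite in_setD in_setU negb_or => /andP[yA yS] /andP[_ yK].
    case: Acomp => _ _ _ /(_ x y xA); rewrite in_setD yK yS => /(_ isT xy).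
    exact/negP.
  - move=> x y xy xB' xA' yA' yB'.
    have yS := subsetP A'S _ yA'.
    have yA : y \in A by move: yB'; rewrite in_setD yS andbT negbK.
    move: xB' xA'; rewrite in_setD in_setU negb_or => /andP[xA xS] /andP[_ xK].
    case: Acomp => _ _ _ /(_ y x yA); rewrite in_setD xK xS adj_sym => /(_ isT xy).
    exact/negP.
have -> : S = A' :|: B'.
  apply/setP=> z; rewrite !in_setU in_setD; case zA: (z \in A) => /=.
    by have /andP[-> _] := inAS _ zA.
  by case zK: (z \in K) => //=; rewrite (subsetP KS _ zK).
case: (leqP k1 k2) => hk.
- exists S2; split.
  + by apply: subset_trans S2B (subsetUr _ _).
  + by [].
  + by apply: td_weak tdS; rewrite ?sub0set // (maxn_idPr hk).
- exists S1; split.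
  + by apply: subset_trans S1A (subsetUl _ _).
  + by [].
  + by apply: td_weak tdS; rewrite ?sub0set // (maxn_idPl (ltnW hk)).
Qed.
Lemma pair_set_eq (T : finType) (a b u v : T) :
  a \in [set u; v] -> b \in [set u; v] -> a != b -> [set a; b] = [set u; v].
Proof.
rewrite !inE => /orP[]/eqP-> /orP[]/eqP-> //; rewrite ?eqxx // => _.
by rewrite setUC.
Qed.

Lemma even_lemma (G : graph) (u v : vert G) k : u != v -> 0 < k ->
  (forall C, is_component (~: [set u; v]) C -> tw (cl u v C) <= k) -> tw G <= k.
Proof.
move=> uv k0 hC.
pose e' := fun a b : vert G => adj G a b || (a != b) && ([set a; b] == [set u; v]).
have [W eW] : {W : {set vert G} | W = [set u; v]} by exists [set u; v].
rewrite -eW in hC.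
have claim : forall n (U : {set vert G}), #|U| <= n -> U \subset ~: W ->
    (forall a b, a \in U -> b \in ~: W -> adj G a b -> b \in U) ->
    td e' (U :|: W) k W.
  elim=> [|n IH] U hU US Ucl; (case: (eqVneq U set0) => [->|Une];
    [by rewrite set0U; apply: td_single; rewrite eW cards2 uv |]).
    by move: hU; rewrite leqn0 cards_eq0 (negbTE Une).
  case/set0Pn: Une => x xU.
  have xS := subsetP US _ xU.
  pose C := comp (~: W) x.
  have Ccomp : is_component (~: W) C := comp_component xS.
  have xC : x \in C := comp_self xS.
  have CU : C \subset U.
    apply: component_sub Ccomp US Ucl _.
    by apply/set0Pn; exists x; rewrite inE xC xU.
  have CS : C \subset ~: W by case: Ccomp.
  pose U' := U :\: C.
  have ltU : #|U'| < #|U|.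
    by apply: proper_card; apply/properP; split; [exact: subsetDl | exists x; rewrite // inE xC].
  have U'S : U' \subset ~: W by apply: subset_trans (subsetDl _ _) US.
  have U'cl : forall a b, a \in U' -> b \in ~: W -> adj G a b -> b \in U'.
    move=> a b; rewrite in_setD => /andP[aC aU] bS ab.
    rewrite in_setD (Ucl _ _ aU bS ab) andbT.
    apply/negP=> bC; case: Ccomp => _ _ _ /(_ b a bC (subsetP US _ aU)).
    by rewrite adj_sym => /(_ ab); apply/negP.
  have tdU' := IH _ (leq_trans ltU hU) U'S U'cl.
  have tdC : td e' (C :|: W) k W.
    have t0 : td e' (C :|: [set u; v]) (tw (cl u v C)) set0.
      apply: (td_of_tw_le (H := cl u v C) (f := val)) (tw_spec _).
      + exact: val_inj.
      + by move=> y; exact: (valP y).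
      + by move=> y yS; exists (Sub y yS).
      + by [].
    rewrite -eW in t0.
    have t1 : td e' (C :|: W) k set0.
      by apply: td_weak t0; rewrite ?sub0set // hC.
    apply: (td_helly t1); first exact: subsetUr.
    move=> a b aW bW ab; apply/orP; right; rewrite ab /=.
    by apply/eqP; apply: pair_set_eq; rewrite -?eW.
  have nW z : z \in C -> z \notin W.
    by move=> zC; have := subsetP CS _ zC; rewrite inE.
  have -> : U :|: W = (C :|: W) :|: (U' :|: W).
    by rewrite -setUUl /U' -{1}(setIidPr CU) setID.
  apply: td_glue tdC tdU' _ _ _.
  - apply/subsetP=> z; rewrite !in_setI !in_setU in_setD.
    by case zW: (z \in W); rewrite ?orbF ?andbF //= => /andP[-> /andP[]].
  - move=> a b ab; rewrite !in_setU in_setD => aA aB bB bA.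
    move: aB bA; rewrite !negb_or => /andP[_ aW] /andP[bC bW].
    have aC : a \in C by move: aA; rewrite (negbTE aW) orbF.
    move: ab; rewrite /e' => /orP[ab|/andP[_ /eqP e]].
      have bS : b \in ~: W by rewrite inE bW.
      by case: Ccomp => _ _ _ /(_ a b aC bS ab); rewrite (negbTE bC).
    by move: aW; rewrite eW -e !inE eqxx.
  - move=> a b ab; rewrite !in_setU in_setD => aB aA bA bB.
    move: aA bB; rewrite !negb_or => /andP[aC aW] /andP[_ bW].
    have bC : b \in C by move: bA; rewrite (negbTE bW) orbF.
    move: ab; rewrite /e' => /orP[ab|/andP[_ /eqP e]].
      have aS : a \in ~: W by rewrite inE aW.
      by case: Ccomp => _ _ _ /(_ b a bC aS); rewrite adj_sym => /(_ ab); rewrite (negbTE aC).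
    by move: aW; rewrite eW -e !inE eqxx.
have := claim _ (~: W) (leqnn _) (subxx _) (fun a b _ h _ => h).
rewrite setUC setUCr => td1.
apply: tw_min; apply: (tw_le_of_td (Z := W)).
by apply: td_weak td1 => // x y h; rewrite /e' h.
Qed.
Section TwoCut.
Variable G : graph.
Implicit Types (C D X : {set vert G}) (u v : vert G).

Lemma side_lemma u v X C :
  X \subset ~: [set u; v] ->
  (forall x y, x \in X -> y \in (~: [set u; v]) :\: X -> ~~ adj G x y) ->
  is_component (~: [set u; v]) C ->
  C \subset X \/ C \subset (~: [set u; v]) :\: X.
Proof.
move=> XS anti Cc; have [CS Cne _ _] := Cc.
case/set0Pn: Cne => c cC.
case cX: (c \in X).
- left; apply: component_sub Cc XS _ _.
    move=> a b aX bS ab; apply/negPn/negP => bX.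
    by move: (anti a b aX); rewrite in_setD bX bS => /(_ isT); rewrite ab.
  by apply/set0Pn; exists c; rewrite inE cC cX.
- right; apply: component_sub Cc (subsetDl _ _) _ _.
    move=> a b; rewrite in_setD => /andP[aX aS] bS ab; rewrite in_setD bS andbT.
    apply/negP => bX.
    by move: (anti b a bX); rewrite in_setD aX aS => /(_ isT); rewrite adj_sym ab.
  by apply/set0Pn; exists c; rewrite in_setI in_setD cC cX (subsetP CS _ cC).
Qed.

Lemma comp_adj u v C D : ~ has_clique_cutset G ->
  is_component (~: [set u; v]) C -> is_component (~: [set u; v]) D ->
  C :&: D = set0 -> exists d, d \in D /\ adj G d u.
Proof.
move=> ncc [CS Cne _ _] [DS Dne _ Dcl] CD.
apply: NNPP => nadj; apply: ncc.
case/set0Pn: Cne => c cC; case/set0Pn: Dne => w wD.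
exists [set v]; split; first by move=> a b; rewrite !inE => /eqP-> /eqP->; rewrite eqxx.
have nv z : z \in ~: [set u; v] -> z \notin [set v].
  by rewrite !inE negb_or => /andP[_].
exists w, c; split; first exact: nv (subsetP DS _ wD).
split; first exact: nv (subsetP CS _ cC).
move=> cwc.
have : c \in D.
  apply: (connect_in_closed (D := D)) wD cwc => a b aD _ bv ab.
  apply: (Dcl a b aD) => //; rewrite !inE negb_or.
  move: bv; rewrite !inE => -> ; rewrite andbT.
  by apply/negP => /eqP bu; subst b; apply: nadj; exists a.
by move=> cD; move/setP: CD => /(_ c); rewrite !inE cC cD.
Qed.

Lemma other_comp u v C : ~ has_clique_cutset G -> proper_2cutset u v ->
  is_component (~: [set u; v]) C ->
  exists D, [/\ is_component (~: [set u; v]) D, C :&: D = set0,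
    (exists d, d \in D /\ adj G d u) & (exists d, d \in D /\ adj G d v)].
Proof.
move=> ncc [uv [X [XS X2 Y2 anti]]] Cc.
pose Y := (~: [set u; v]) :\: X.
have XYd z : z \in X -> z \in Y -> False by move=> zX; rewrite in_setD zX.
have [Z [ZS Zcl Zpos CZ]] : exists Z : {set vert G}, [/\ Z \subset ~: [set u; v],
    (forall D, is_component (~: [set u; v]) D -> D :&: Z != set0 -> D \subset Z),
    0 < #|Z| & C :&: Z = set0].
  have Xcl D : is_component (~: [set u; v]) D -> D :&: X != set0 -> D \subset X.
    move=> Dc DX; case: (side_lemma XS anti Dc) => // DY.
    case/set0Pn: DX => z; rewrite inE => /andP[zD zX].
    by case: (XYd _ zX (subsetP DY _ zD)).
  have Ycl D : is_component (~: [set u; v]) D -> D :&: Y != set0 -> D \subset Y.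
    move=> Dc DY; case: (side_lemma XS anti Dc) => // DX.
    case/set0Pn: DY => z; rewrite inE => /andP[zD zY].
    by case: (XYd _ (subsetP DX _ zD) zY).
  case: (side_lemma XS anti Cc) => CX.
  - exists Y; split=> //; first exact: subsetDl.
      by apply: leq_trans Y2.
    apply/setP=> z; rewrite in_setI in_set0; apply/negP => /andP[zC zY].
    exact: XYd _ (subsetP CX _ zC) zY.
  - exists X; split=> //; first by apply: leq_trans X2.
    apply/setP=> z; rewrite in_setI in_set0; apply/negP => /andP[zC zX].
    exact: XYd _ zX (subsetP CX _ zC).
case/card_gt0P: Zpos => w wZ.
have wS := subsetP ZS _ wZ.
pose D := comp (~: [set u; v]) w.
have Dc : is_component (~: [set u; v]) D := comp_component wS.
have DZ : D \subset Z.
  by apply: Zcl Dc _; apply/set0Pn; exists w; rewrite inE comp_self.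
have CD : C :&: D = set0.
  apply/setP=> z; rewrite in_setI in_set0; apply/negP => /andP[zC zD].
  by move/setP: CZ => /(_ z); rewrite in_setI in_set0 zC (subsetP DZ _ zD).
exists D; split=> //.
- exact: comp_adj ncc Cc Dc CD.
- rewrite setUC in Cc Dc; exact: comp_adj ncc Cc Dc CD.
Qed.
End TwoCut.
Lemma set_pair_cases (T : finType) (a b u v : T) :
  [set a; b] = [set u; v] -> a != b -> (a = u /\ b = v) \/ (a = v /\ b = u).
Proof.
move=> e ab.
have : a \in [set u; v] by rewrite -e !inE eqxx.
have : b \in [set u; v] by rewrite -e !inE eqxx orbT.
move: ab; rewrite !inE => ab /orP[]/eqP bu /orP[]/eqP au; subst a b;
  rewrite ?eqxx // in ab; by [left|right].
Qed.

Lemma connected_single (G : graph) (a : vert G) : connected_on [set a].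
Proof. by move=> x y; rewrite !inE => /eqP-> /eqP->; apply: connect0. Qed.

Lemma connected_pair (G : graph) (a b : vert G) : adj G a b -> connected_on [set a; b].
Proof.
move=> ab x y; rewrite !inE => /orP[]/eqP-> /orP[]/eqP->; try apply: connect0.
- by apply: connect_in_edge; rewrite ?inE ?eqxx ?orbT.
- by apply: connect_in_edge; rewrite ?inE ?eqxx ?orbT // adj_sym.
Qed.

Lemma cls_minor (G : graph) (u v : vert G) (C D : {set vert G}) :
  is_component (~: [set u; v]) D -> C :&: D = set0 ->
  (exists d, d \in D /\ adj G d u) -> (exists d, d \in D /\ adj G d v) ->
  tw (clstar u v C) <= tw G.
Proof.
move=> [DS Dne Dcon _] CD [du [duD duu]] [dv [dvD dvv]].
pose phi (o : vert (clstar u v C)) : {set vert G} :=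
  match o with Some x => [set val x] | None => D end.
have notD (x : clV u v C) : val x \notin D.
  have := valP x; rewrite in_setU => /orP[xC|xuv].
    by apply/negP=> xD; move/setP: CD => /(_ (val x)); rewrite in_setI in_set0 xC xD.
  by apply/negP=> /(subsetP DS); rewrite in_setC xuv.
apply: (minor_tw (phi := phi)); split.
- case=> [x|] //=; apply/set0Pn; by exists (val x); rewrite inE.
- case=> [x|] [y|] //= xy.
  + rewrite disjoints1 inE; apply: contra xy => /eqP e.
    by apply/eqP; congr Some; apply: val_inj.
  + by rewrite disjoints1 notD.
  + by rewrite disjoint_sym disjoints1 notD.
- case=> [x|] /=; [exact: connected_single | exact: Dcon].
- case=> [x|] [y|] //=.
  + move=> /andP[xy _]; exists (val x), (val y); by rewrite !inE.
  + case: x => x' hx' /= /orP[]/eqP e; subst x'.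
    * by exists u, du; rewrite inE eqxx duD adj_sym.
    * by exists v, dv; rewrite inE eqxx dvD adj_sym.
  + case: y => y' hy' /= /orP[]/eqP e; subst y'.
    * by exists du, u; rewrite inE eqxx duD.
    * by exists dv, v; rewrite inE eqxx dvD.
Qed.

Lemma cl_minor_cls (G : graph) (u v : vert G) (C : {set vert G}) :
  tw (cl u v C) <= tw (clstar u v C).
Proof.
pose phi (x : vert (cl u v C)) : {set vert (clstar u v C)} :=
  if val x == u then [set Some x; None] else [set Some x].
have inphi x : Some x \in phi x by rewrite /phi; case: ifP; rewrite !inE eqxx.
have Nphi x : val x = u -> None \in phi x by rewrite /phi => ->; rewrite eqxx !inE eqxx orbT.
have phiP x o : o \in phi x -> o = Some x \/ (o = None /\ val x = u).
  rewrite /phi; case: ifP => [/eqP xu|_]; rewrite !inE.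
    by case/orP => /eqP->; [left | right].
  by move=> /eqP->; left.
apply: (minor_tw (phi := phi)); split.
- by move=> x; apply/set0Pn; exists (Some x).
- move=> x y xy; apply/pred0P => o /=; apply/negP=> /andP[/phiP ox /phiP oy].
  case: ox oy => [->|[-> xu]] [|[]] //.
  + by case=> e; rewrite e eqxx in xy.
  + by move=> _ yu; apply: (negP xy); apply/eqP/val_inj; rewrite xu yu.
- move=> x; rewrite /phi; case: ifP => [/eqP xu|_]; last exact: connected_single.
  by apply: connected_pair; rewrite /= xu eqxx.
- move=> x y h.
  have xyne : val x != val y.
    case/orP: h => [xy|/andP[//]]; apply/eqP=> e'; move: xy.
    by rewrite /= e' adj_irr.
  case: (boolP ([set val x; val y] == [set u; v])) => [/eqP e|ne].
  + case: (set_pair_cases e xyne) => [[xu yv]|[xv yu]].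
    * exists None, (Some y); rewrite Nphi // inphi /= yv eqxx orbT; split=> //.
    * exists (Some x), None; rewrite Nphi // inphi /= xv eqxx orbT; split=> //.
  + case/orP: h => [xy|/andP[_ e]]; last by rewrite e in ne.
    by exists (Some x), (Some y); rewrite !inphi /= xy ne.
Qed.
Definition pb (P : Prop) : bool := if excluded_middle_informative P then true else false.
Lemma pbP (P : Prop) : pb P <-> P.
Proof. by rewrite /pb; case: excluded_middle_informative. Qed.

Lemma tw_pos (H : graph) (x y : vert H) : adj H x y -> 0 < tw H.
Proof.
move=> xy; rewrite lt0n; apply/negP=> /eqP t0.
have [m [r [B [_ _ edg _ siz]]]] := tw_spec H; rewrite t0 in siz.
have [i /andP[xi yi]] := edg _ _ xy.
have /card_le1_eqP h := siz i.
by move: xy; rewrite (h x y xi yi) adj_irr.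
Qed.

Lemma induced_minor (G : graph) (S : {set vert G}) : tw (induced S) <= tw G.
Proof.
apply: (minor_tw (phi := fun x : vert (induced S) => [set val x])); split.
- by move=> x; apply/set0Pn; exists (val x); rewrite inE.
- move=> x y xy; rewrite disjoints1 inE; apply: contra xy => /eqP e.
  by apply/eqP; apply: val_inj.
- by move=> x; apply: connected_single.
- by move=> a b ab; exists (val a), (val b); rewrite !inE !eqxx.
Qed.

Lemma tw_le_cc (G : graph) : exists S : {set vert G},
  [/\ ~ has_clique_cutset (induced S), tw G <= tw (induced S) &
      (has_clique_cutset G -> #|S| < #|vert G|)].
Proof.
have [S [_ ncc td1]] := odd_lemma (leqnn #|[set: vert G]|).
exists S; split=> //.
  by apply: tw_min; apply: tw_le_of_td td1.
move=> cc; rewrite -cardsT; apply: proper_card; apply/properP; split; first exact: subsetT.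
apply: NNPP => h; apply: ncc.
have -> : S = setT.
  apply/setP=> z; rewrite in_setT; apply: NNPP => zS; apply: h.
  by exists z; [rewrite in_setT | apply/negP].
by apply/cc_induced/cc_G.
Qed.

Lemma proper_two_cutset (G : graph) (u v : vert G) : proper_2cutset u v -> two_cutset u v.
Proof.
move=> [uv [X [XS X2 Y2 anti]]]; split=> //.
case/card_gt0P: (ltnW X2) => x xX; case/card_gt0P: (ltnW Y2) => y yY.
have yS : y \in ~: [set u; v] by move: yY; rewrite in_setD => /andP[].
exists x, y; split; first by have := subsetP XS _ xX; rewrite in_setC.
split; first by move: yS; rewrite in_setC.
move=> c; have : y \in X.
  apply: (connect_in_closed (D := X)) xX c => a b aX _ bS ab.
  apply/negPn/negP => bX.
  by move: (anti a b aX); rewrite in_setD bX bS => /(_ isT); rewrite ab.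
by move: yY; rewrite in_setD => /andP[/negP].
Qed.

Section Final.
Variables (F : graph -> Prop) (hF : hereditary F) (hS : two_cutset_safe F).

Lemma clb_pos (G : graph) (u v : vert G) C b : u != v -> 0 < tw (clb u v C b).
Proof.
move=> uv.
have uin : u \in C :|: [set u; v] by rewrite !inE eqxx orbT.
have vin : v \in C :|: [set u; v] by rewrite !inE eqxx !orbT.
case: b; rewrite /clb.
- apply: (@tw_pos (clstar u v C) (Some (Sub u uin : clV u v C)) None).
  by rewrite /= eqxx.
- apply: (@tw_pos (cl u v C) (Sub u uin : clV u v C) (Sub v vin)).
  by rewrite /= /cl_adj /= uv eqxx orbT.
Qed.

Lemma even_bound (G : graph) (u v : vert G) k :
  F G -> ~ has_clique_cutset G -> proper_2cutset u v -> 0 < k ->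
  (forall C b, is_component (~: [set u; v]) C -> F (clb u v C b) -> tw (clb u v C b) <= k) ->
  tw G <= k.
Proof.
move=> FG ncc p2 k0 hk.
have uv : u != v by case: p2.
apply: (even_lemma uv k0) => C Cc.
case: (hS FG (nocc_connected ncc) (nocc_no1cut ncc) (proper_two_cutset p2) Cc) => h.
- exact: (hk C false).
- apply: leq_trans (cl_minor_cls u v C) _; exact: (hk C true).
Qed.

Lemma clb_le (G : graph) (u v : vert G) C b :
  ~ has_clique_cutset G -> proper_2cutset u v -> is_component (~: [set u; v]) C ->
  tw (clb u v C b) <= tw G.
Proof.
move=> ncc p2 Cc.
have [D [Dc CD du dv]] := other_comp ncc p2 Cc.
have h := cls_minor Dc CD du dv.
case: b => //=; exact: leq_trans (cl_minor_cls u v C) h.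
Qed.

Lemma pdec_tw i G H : pdec F i G H -> F G -> tw G = tw H.
Proof.
elim=> {i G H}.
- by [].
- move=> i G S H _ _ _ maxS _ IH FG.
  rewrite -(IH (hF.2 _ _ FG)); apply/eqP; rewrite eqn_leq induced_minor andbT.
  have [S' [ncc' le' _]] := tw_le_cc G.
  exact: leq_trans le' (maxS _ ncc').
- move=> i G u v C b H _ _ ncc p2 Cc FC maxC _ IH FG.
  rewrite -(IH FC); apply/eqP; rewrite eqn_leq (clb_le b ncc p2 Cc) andbT.
  apply: (even_bound FG ncc p2) => //.
  by apply: clb_pos; case: p2.
Qed.

Lemma exists_prime n : forall G : graph, #|vert G| <= n -> F G ->
  exists J, [/\ F J, is_prime J & tw G <= tw J].
Proof.
elim: n => [|n IH] G hG FG.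
  exists G; split=> //; split.
  - by move=> [K [_ [x _]]]; move: hG; rewrite leqn0 => /eqP/card0_eq/(_ x).
  - by move=> [u _]; move: hG; rewrite leqn0 => /eqP/card0_eq/(_ u).
case: (classic (is_prime G)) => [pr|npr]; first by exists G.
case: (classic (has_clique_cutset G)) => [cc|ncc].
  have [S [nccS le lt]] := tw_le_cc G.
  have szS : #|vert (induced S)| <= n.
    by rewrite card_sig -ltnS; exact: leq_trans (lt cc) hG.
  have [J [FJ pJ leJ]] := IH (induced S) szS (hF.2 _ _ FG).
  by exists J; split=> //; exact: leq_trans le leJ.
have [u [v p2]] : exists u v : vert G, proper_2cutset u v.
  by apply: NNPP => h; apply: npr; split.
have p2' := p2; case: p2' => [uv [X [XS X2 Y2 anti]]].
case/card_gt0P: (ltnW X2) => x xX.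
have xS := subsetP XS _ xX.
pose P := [pred C : {set vert G} | pb (is_component (~: [set u; v]) C)].
have P0 : P (comp (~: [set u; v]) x) by apply/pbP; apply: comp_component.
case: (arg_maxnP (fun C => tw (cl u v C)) P0) => C1 /pbP C1c C1max.
have twle : tw G <= tw (cl u v C1).
  apply: (even_lemma uv (clb_pos C1 false uv)) => C Cc.
  by apply: C1max; apply/pbP.
have [Z [Zsz ZC]] : exists Z : {set vert G}, 1 < #|Z| /\ (C1 :|: [set u; v]) :&: Z = set0.
  have disj (A : {set vert G}) : A \subset ~: [set u; v] -> C1 :&: A = set0 ->
      (C1 :|: [set u; v]) :&: A = set0.
    move=> AS CA; apply/setP=> z; rewrite in_setI in_setU in_set0.
    case zA: (z \in A); rewrite ?andbF // andbT.
    have := subsetP AS _ zA; rewrite in_setC => /negbTE ->; rewrite orbF.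
    by apply/negP=> zC; move/setP: CA => /(_ z); rewrite in_setI zC zA in_set0.
  case: (side_lemma XS anti C1c) => CX.
  - exists ((~: [set u; v]) :\: X); split=> //; apply: disj; first exact: subsetDl.
    apply/setP=> z; rewrite in_setI in_setD in_set0.
    by apply/negP=> /and3P[zC zX _]; rewrite (subsetP CX _ zC) in zX.
  - exists X; split=> //; apply: disj => //.
    apply/setP=> z; rewrite in_setI in_set0.
    apply/negP=> /andP[zC zX]; have := subsetP CX _ zC.
    by rewrite in_setD zX.
have szC : #|C1 :|: [set u; v]|.+1 <= n.
  have h1 := cardsU (C1 :|: [set u; v]) Z; rewrite ZC cards0 subn0 in h1.
  rewrite -ltnS; apply: leq_trans hG.
  apply: (leq_trans _ (max_card (mem ((C1 :|: [set u; v]) :|: Z)))).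
  rewrite h1; lia.
case: (hS FG (nocc_connected ncc) (nocc_no1cut ncc) (proper_two_cutset p2) C1c) => FJ.
- have sz : #|vert (cl u v C1)| <= n by rewrite card_sig; exact: ltnW.
  have [J [FJ' pJ leJ]] := IH (cl u v C1) sz FJ.
  by exists J; split=> //; exact: leq_trans twle leJ.
- have sz : #|vert (clstar u v C1)| <= n by rewrite card_option card_sig.
  have [J [FJ' pJ leJ]] := IH (clstar u v C1) sz FJ.
  exists J; split=> //; apply: leq_trans twle _.
  exact: leq_trans (cl_minor_cls u v C1) leJ.
Qed.
End Final.

Theorem mainTheorem3 (t : nat) (ht : 0 < t) (F : graph -> Prop)
  (hF : hereditary F) (hS : two_cutset_safe F) (G : graph) (hG : F G) :
  (forall H : graph, prime_base F G H -> tw G = tw H) /\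
  (exists J : graph, [/\ F J, is_prime J & tw G <= tw J]).
Proof.
split.
- by move=> H pd; apply: (pdec_tw hF hS pd hG).
- exact: (exists_prime hF hS (leqnn _) hG).
Qed.
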